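(* Let $P$, $T_\Sigma$, the lattice points $b_1,\dots,b_{p+3}$ and the coefficients $a_i(q)$ be as in the context. Let $b_{i_1},b_{i_2},b_{i_3}$ be the vertices of a triangle $\sigma$ of $T_\Sigma$, listed in counterclockwise order, and let $b_{i_4}$ be a lattice point of $P$ which is not a vertex of $\sigma$. Write $b_{i_4}=b_{i_3}+m'(b_{i_1}-b_{i_3})+n'(b_{i_2}-b_{i_3})$ with $m',n'\in\mathbb{Z}$. Then $$\frac{a_{i_4}(q)\,a_{i_3}(q)^{m'+n'-1}}{a_{i_1}(q)^{m'}\,a_{i_2}(q)^{n'}}$$ is a non-constant monomial of $q$.
   Context: Let $P\subset\mathbb{R}^2$ be a convex lattice polygon with a unimodular triangulation $T_\Sigma$ (every triangle of $T_\Sigma$ has lattice vertices and area $1/2$, and the vertex set of $T_\Sigma$ is $P\cap\mathbb{Z}^2$); this encodes a smooth toric Calabi–Yau 3-fold whose fan has rays generated by $(m,n,1)$, $(m,n)\in P\cap\mathbb{Z}^2$, and 3-cones over the triangles of $T_\Sigma$. Write $P\cap\mathbb{Z}^2=\{b_1,\dots,b_{p+3}\}$, $b_i=(m_i,n_i)$, with $b_1=(1,0)$, $b_2=(0,1)$, $b_3=(0,0)$, where $\sigma_1=\{b_1,b_2,b_3\}$ is a triangle of $T_\Sigma$. Let $L=\ker(\mathbb{Z}^{p+3}\to\mathbb{Z}^3,\ e_i\mapsto(m_i,n_i,1))$ and let $D_i\in L^\vee$ be the restriction of the $i$-th coordinate functional. For a triangle $\sigma$ of $T_\Sigma$ let $I'_\sigma$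 be the set of indices of its vertices; then $\{D_j:j\notin I'_\sigma\}$ is a basis of $L^\vee\otimes\mathbb{Q}$. Fix $H_1,\dots,H_p\in L^\vee\otimes\mathbb{Q}$ (nef classes) such that for every triangle $\sigma$, $H_k=\sum_{j\notin I'_\sigma}s^\sigma_{k,j}D_j$ with all $s^\sigma_{k,j}\in\mathbb{Z}_{\ge0}$ and the matrix $(s^\sigma_{k,j})$ nondegenerate. For $q\in(\mathbb{C}^* )^p$ put $a_i(q)=1$ for $i=1,2,3$ and $a_i(q)=\prod_{k=1}^p q_k^{s^{\sigma_1}_{k,i}}$ for $i\ge4$; the mirror curve is $\{H=0\}\subset(\mathbb{C}^* )^2$ with $H(X,Y,q)=\sum_{i=1}^{p+3}a_i(q)X^{m_i}Y^{n_i}$. A non-constant monomial of $q$ means $\prod_k q_k^{e_k}$ with $e_k\in\mathbb{Z}_{\ge0}$ not all zero. *)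

(* Defs.v *)
From HB Require Import structures.
From mathcomp Require Import all_boot all_order all_algebra.
Set Implicit Arguments. Unset Strict Implicit. Unset Printing Implicit Defensive.
Import Order.TTheory GRing.Theory Num.Theory.
Local Open Scope ring_scope.

(* Lattice points are indexed by 'I_p.+3 (= {b_1,...,b_{p+3}}); index 0,1,2
   correspond to b_1, b_2, b_3 of the paper. *)
Definition o0 {p : nat} : 'I_p.+3 := @Ordinal p.+3 0 isT.
Definition o1 {p : nat} : 'I_p.+3 := @Ordinal p.+3 1 isT.
Definition o2 {p : nat} : 'I_p.+3 := @Ordinal p.+3 2 isT.

Definition vsub (u v : int * int) : int * int := (u.1 - v.1, u.2 - v.2).
Definition det2 (u v : int * int) : int := u.1 * v.2 - u.2 * v.1.

Definition in_hull (N : nat) (b : 'I_N -> int * int) (S : {set 'I_N})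
    (x : rat * rat) : Prop :=
  exists lam : 'I_N -> rat,
    [/\ (forall j, 0 <= lam j), (forall j, j \notin S -> lam j = 0),
        \sum_j lam j = 1,
        x.1 = \sum_j lam j * ((b j).1)%:~R
      & x.2 = \sum_j lam j * ((b j).2)%:~R].

Definition lattice_points_of_polygon (N : nat) (b : 'I_N -> int * int) : Prop :=
  injective b /\
  forall z : int * int, in_hull b setT ((z.1)%:~R, (z.2)%:~R) ->
    exists j, b j = z.

Definition unimodular_triangulation (N : nat) (b : 'I_N -> int * int)
    (T : seq {set 'I_N}) : Prop :=
  [/\ uniq T,
      (forall sg, sg \in T -> #|sg| = 3%N /\
         exists i j k, sg = [set i; j; k] /\
           `|det2 (vsub (b i) (b k)) (vsub (b j) (b k))| = 1),
      (forall x, in_hull b setT x <-> exists2 sg, sg \in T & in_hull b sg x),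
      (forall sg tau x, sg \in T -> tau \in T ->
         in_hull b sg x -> in_hull b tau x -> in_hull b (sg :&: tau) x)
    & (forall j, exists2 sg, sg \in T & j \in sg)].

Definition in_L (N : nat) (b : 'I_N -> int * int) (l : 'I_N -> int) : Prop :=
  [/\ \sum_j l j * (b j).1 = 0, \sum_j l j * (b j).2 = 0 & \sum_j l j = 0].

Definition nondegenerate_coeffs (p : nat) (s : 'I_p -> 'I_p.+3 -> nat)
    (sg : {set 'I_p.+3}) : Prop :=
  #|~: sg| = p /\
  \rank (\matrix_(k < p, t < #|~: sg|) ((s k (enum_val t))%:R : rat)) = p.

Definition a_coef (F : fieldType) (p : nat) (s1 : 'I_p -> 'I_p.+3 -> nat)
    (i : 'I_p.+3) (q : 'I_p -> F) : F :=
  if (i < 3)%N then 1 else \prod_(k < p) q k ^+ s1 k i.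

Definition nonconstant_monomial (F : fieldType) (p : nat)
    (f : ('I_p -> F) -> F) : Prop :=
  exists e : 'I_p -> nat, (exists k, e k != 0%N) /\
    forall q : 'I_p -> F, (forall k, q k != 0) -> f q = \prod_(k < p) q k ^+ e k.

(* Main.v *)
Require Import Defs.
From HB Require Import structures.
From mathcomp Require Import all_boot all_order all_algebra.
From mathcomp Require Import ring.
Import Order.TTheory GRing.Theory Num.Theory.
Local Open Scope ring_scope.

Section Mono.
Variables (F : fieldType) (p : nat) (q : 'I_p -> F).
Definition Gm (e : 'I_p -> int) : F := \prod_k q k ^ e k.

Lemma GmM (hq : forall k, q k != 0) e e' :
  Gm e * Gm e' = Gm (fun k => e k + e' k).
Proof.
rewrite /Gm -big_split; apply: eq_bigr => k _; by rewrite expfzDr.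
Qed.

Lemma GmX e z : Gm e ^ z = Gm (fun k => e k * z).
Proof.
rewrite /Gm (big_morph (fun x : F => x ^ z) (fun x y => expfzMl x y z) (exp1rz _ z)).
by apply: eq_bigr => k _; rewrite exprz_exp.
Qed.

Lemma GmV e : (Gm e)^-1 = Gm (fun k => - e k).
Proof. by rewrite -exprN1 GmX; apply: eq_bigr => k _; rewrite mulrN1. Qed.
End Mono.

Lemma sum_ind (N : nat) (P : pred 'I_N) (g : 'I_N -> int) (i : 'I_N) :
  \sum_(j | P j) g j * (j == i)%:R = if P i then g i else 0.
Proof.
case: ifP => Pi.
  rewrite (bigD1 i) //= eqxx mulr1 big1 ?addr0 // => j /andP [_ /negbTE ->].
  by rewrite mulr0.
by rewrite big1 // => j Pj; case: eqP => [ej|]; [rewrite ej Pi in Pj | rewrite mulr0].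
Qed.

Lemma sum_l (N : nat) (P : pred 'I_N) (g : 'I_N -> int) (i1 i2 i3 i4 : 'I_N)
  (m' n' : int) :
  \sum_(j | P j) g j * ((j == i4)%:R + (m' + n' - 1) * (j == i3)%:R
       - m' * (j == i1)%:R - n' * (j == i2)%:R)
  = (if P i4 then g i4 else 0) + (m' + n' - 1) * (if P i3 then g i3 else 0)
    - m' * (if P i1 then g i1 else 0) - n' * (if P i2 then g i2 else 0).
Proof.
rewrite -(@sum_ind _ P g i4) -(@sum_ind _ P g i3) -(@sum_ind _ P g i1) -(@sum_ind _ P g i2).
rewrite !mulr_sumr -!sumrN -!big_split /=.
by apply: eq_bigr => j _; ring.
Qed.

Theorem proposition2p5p4 (F : numClosedFieldType) (p : nat)
    (b : 'I_p.+3 -> int * int) (T : seq {set 'I_p.+3})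
    (H : 'I_p -> ('I_p.+3 -> int) -> rat)
    (s : {set 'I_p.+3} -> 'I_p -> 'I_p.+3 -> nat)
    (i1 i2 i3 i4 : 'I_p.+3) (m' n' : int) :
  lattice_points_of_polygon b ->
  unimodular_triangulation b T ->
  b o0 = (1, 0) -> b o1 = (0, 1) -> b o2 = (0, 0) ->
  [set o0; o1; o2] \in T ->
  (forall sg, sg \in T -> forall k l, in_L b l ->
     H k l = \sum_(j | j \notin sg) (s sg k j)%:R * (l j)%:~R) ->
  (forall sg, sg \in T -> nondegenerate_coeffs (s sg) sg) ->
  [set i1; i2; i3] \in T ->
  0 < det2 (vsub (b i1) (b i3)) (vsub (b i2) (b i3)) ->
  i4 \notin [set i1; i2; i3] ->
  b i4 = ((b i3).1 + m' * ((b i1).1 - (b i3).1) + n' * ((b i2).1 - (b i3).1),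
          (b i3).2 + m' * ((b i1).2 - (b i3).2) + n' * ((b i2).2 - (b i3).2)) ->
  nonconstant_monomial (fun q : 'I_p -> F =>
    let a i := a_coef (s [set o0; o1; o2]) i q in
    a i4 * a i3 ^ (m' + n' - 1) / (a i1 ^ m' * a i2 ^ n')).
Proof.
move=> _ _ _ _ _ hs1 hH hnd hs _ hi4 hb4.
set s1 := [set o0; o1; o2].
set sg := [set i1; i2; i3].
pose l j : int := (j == i4)%:R + (m' + n' - 1) * (j == i3)%:R
       - m' * (j == i1)%:R - n' * (j == i2)%:R.
have hL : in_L b l.
  split.
  - under eq_bigr => j _ do rewrite mulrC.
    rewrite (@sum_l _ xpredT (fun j => (b j).1)) /= hb4 /=; ring.
  - under eq_bigr => j _ do rewrite mulrC.
    rewrite (@sum_l _ xpredT (fun j => (b j).2)) /= hb4 /=; ring.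
  - under eq_bigr => j _ do rewrite -[l j]mul1r.
    rewrite (@sum_l _ xpredT (fun j => 1)) /=; ring.
pose c (i : 'I_p.+3) (k : 'I_p) : int := if (i < 3)%N then 0 else (s s1 k i)%:Z.
have hin1 : forall j : 'I_p.+3, (j \in s1) = (j < 3)%N.
  move=> [[|[|[|n]]] Hn]; by rewrite !inE.
have hE : forall k, c i4 k + (m' + n' - 1) * c i3 k - m' * c i1 k - n' * c i2 k
                    = (s sg k i4)%:Z.
  move=> k.
  have := hH _ hs k l hL; rewrite (hH _ hs1 k l hL) => /eqP.
  have key : forall sg' : {set 'I_p.+3},
    \sum_(j | j \notin sg') ((s sg' k j)%:R : rat) * (l j)%:~R
    = ((\sum_(j | j \notin sg') (s sg' k j)%:Z * l j)%:~R : rat).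
    by move=> sg'; rewrite rmorph_sum; apply: eq_bigr => j _; rewrite rmorphM.
  rewrite !key eqr_int => /eqP.
  rewrite /l (@sum_l _ (fun j => j \notin s1) (fun j => (s s1 k j)%:Z)).
  rewrite (@sum_l _ (fun j => j \notin sg) (fun j => (s sg k j)%:Z)).
  have m1 : i1 \in sg by rewrite !inE eqxx.
  have m2 : i2 \in sg by rewrite !inE eqxx ?orbT.
  have m3 : i3 \in sg by rewrite !inE eqxx ?orbT.
  rewrite hi4 m1 m2 m3 !hin1 /= !mulr0 !subr0 ?addr0 => <-.
  by rewrite /c; case: (i4 < 3)%N; case: (i3 < 3)%N; case: (i1 < 3)%N;
    case: (i2 < 3)%N.
exists (fun k => s sg k i4); split.
  case: (pickP (fun k => s sg k i4 != 0%N)) => [k hk | hz]; first by exists k.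
  have [hcard hrk] := hnd _ hs.
  set A := \matrix_(k < p, t < #|~: sg|) ((s sg k (enum_val t))%:R : rat).
  have Hi4 : i4 \in ~: sg by rewrite inE.
  set t0 := enum_rank_in Hi4 i4.
  have rf : row_free A^T by rewrite /row_free mxrank_tr hrk hcard.
  have r0 : row t0 A^T = 0.
    apply/rowP => j; rewrite !mxE enum_rankK_in //.
    by move: (hz j) => /negbFE /eqP ->.
  have := @row_free_inj _ 1%N _ _ _ rf (delta_mx 0 t0) 0.
  rewrite -rowE r0 mul0mx => /(_ erefl) /matrixP /(_ 0 t0).
  by rewrite !mxE !eqxx.
move=> q hq /=.
have ha : forall i, a_coef (s s1) i q = @Gm _ _ q (c i).
  move=> i; rewrite /a_coef /Gm /c; case: ifP => _.
    by rewrite big1 // => k _; rewrite expr0z.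
  by [].
rewrite !ha !GmX.
rewrite (GmM _ _ _ hq) (GmM _ _ _ hq) GmV (GmM _ _ _ hq) /Gm.
apply: eq_bigr => k _.
transitivity (q k ^ (s sg k i4)%:Z); last by [].
rewrite -hE; congr (_ ^ _); ring.
Qed.
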